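(* Let $n$ be a positive integer and let $\Phi,\Psi\colon[n]^n\to[n]^n$ be the maps defined in the context. Then: (1) for all $\mathbf a\in[n]^n$, $z(\mathbf a)=\operatorname{run}(\Phi(\mathbf a))$, $Z(\mathbf a)=\operatorname{Run}(\Phi(\mathbf a))$, $\operatorname{run}(\mathbf a)=z(\Psi(\mathbf a))$ and $\operatorname{Run}(\mathbf a)=Z(\Psi(\mathbf a))$; (2) $\Phi$ and $\Psi$ are bijections and $\Psi=\Phi^{-1}$; (3) $\Phi(\mathsf{PF}_n)=\mathsf{PF}_n$.
   Context: Let $[n]=\{1,\dots,n\}$ and write $\mathbf a\in[n]^n$ as $(a_1,\dots,a_n)$, also viewed as a function $j\mapsto a_j$. $\mathsf{PF}_n$ is the set of $\mathbf a\in[n]^n$ with $|\{j:a_j\le i\}|\ge i$ for every $i\in[n]$ (parking functions). Center: $Z(\mathbf a)$ is the largest subset $X=\{x_1<\dots<x_\ell\}\subseteq[n]$ with $a_{x_i}\le i$ for all $i\in[\ell]$; $z(\mathbf a)=|Z(\mathbf a)|$. Run: if $1\in\{a_1,\dots,a_n\}$, $\operatorname{run}(\mathbf a)=\max\{i\in[n]: [i]\subseteq\{a_1,\dots,a_n\}\}$; otherwise $\operatorname{run}(\mathbf a)=0$. $\operatorname{Run}(\mathbf a)=\{\max\{j: a_j=m\}: 1\le m\le \operatorname{run}(\mathbf a)\}$ (empty if $\operatorname{run}(\mathbf a)=0$). For a permutation $\mathbf w=(w_1,\dots,w_k)\in\mathfrak S_k$, define $f_{w_i}=|\{m\in[i]: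 w_m\le w_i\}|$ for $i\in[k]$ and $t_k(\mathbf w)=(f_1,\dots,f_k)$; $t_k$ is a bijection from $\mathfrak S_k$ onto $[1]\times[2]\times\dots\times[k]$. Definition of $\Phi$: if $Z(\mathbf a)=\varnothing$, $\Phi(\mathbf a)=\mathbf a$. Otherwise let $Z(\mathbf a)=\{i_1<\dots<i_k\}$, let $\mathbf b=b_1\cdots b_k=t_k^{-1}(a_{i_1}\cdots a_{i_k})\in\mathfrak S_k$, and let $\sigma_{\mathbf a}\in\mathfrak S_n$ be given by $\sigma_{\mathbf a}(1)=k+1$, $\sigma_{\mathbf a}(j)=b_{j-1}$ for $2\le j\le k+1$, $\sigma_{\mathbf a}(j)=j$ for $k+2\le j\le n$. Then $\Phi(\mathbf a)(j)=b_\ell$ if $j=i_\ell\in Z(\mathbf a)$, and $\Phi(\mathbf a)(j)=\sigma_{\mathbf a}(a_j)$ if $j\notin Z(\mathbf a)$. Definition of $\Psi$: if $\operatorname{Run}(\mathbf a)=\varnothing$, $\Psi(\mathbf a)=\mathbf a$. Otherwise let $\operatorname{Run}(\mathbf a)=\{i_1<\dots<i_k\}$, let $\mathbf c=c_1\cdots c_k=t_k(a_{i_1}\cdots a_{i_k})$, and let $\tau_{\mathbf a}\in\mathfrak S_n$ be given by $\tau_{\mathbf a}(j)=\ell+1$ if $j=a_{i_\ell}\in[k]$, $\tau_{\mathbf a}(k+1)=1$, $\tau_{\mathbf a}(j)=j$ for $k+2\le j\le n$. Then $\Psi(\mathbf a)(j)=c_\ell$ if $j=i_\ell\in\operatorname{Run}(\mathbf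 a)$, and $\Psi(\mathbf a)(j)=\tau_{\mathbf a}(a_j)$ if $j\notin\operatorname{Run}(\mathbf a)$. *)

(* Defs.v *)
(* Encoding: an element a of [n]^n is a finite function
   a : {ffun 'I_n -> 'I_n}; position j : 'I_n stands for the paper's position
   j+1, and the value a j : 'I_n stands for the paper's value (a j).+1
   (accessed through [v1 a j]). *)
From mathcomp Require Import all_boot all_order.
Set Implicit Arguments. Unset Strict Implicit. Unset Printing Implicit Defensive.

Section Defs.
Variable n : nat.
Implicit Types (a : {ffun 'I_n -> 'I_n}) (X : {set 'I_n}).

Definition v1 a (j : 'I_n) : nat := (a j).+1.

Definition is_PF a : bool :=
  [forall i : 'I_n, i.+1 <= #|[set j | v1 a j <= i.+1]|].

Definition rank X (x : 'I_n) : nat := #|[set y in X | y <= x]|.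

Definition center_ok a X : bool := [forall x in X, v1 a x <= rank X x].

(* Z(a): the largest such subset (the union of all of them, which is itself
   admissible, hence the maximum w.r.t. inclusion and cardinality) *)
Definition Zc a : {set 'I_n} := \bigcup_(X | center_ok a X) X.
Definition zc a : nat := #|Zc a|.

Definition vals a : seq nat := [seq v1 a j | j : 'I_n].

Definition run a : nat :=
  \max_(i < n.+1 | all (fun m => m \in vals a) (iota 1 i)) i.

Definition Run a : {set 'I_n} :=
  [set j : 'I_n | (v1 a j <= run a) &&
                  [forall k : 'I_n, (v1 a k == v1 a j) ==> (k <= j)]].

End Defs.

(* t_k on permutations of [k] in one-line notation w = w_1 ... w_k (a
   sequence, perm_eq to iota 1 k): the output is (f_1,...,f_k) with
   f_{w_i} = |{m in [i] : w_m <= w_i}|. *)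
Definition tk (w : seq nat) : seq nat :=
  [seq count (fun x => x <= v) (take (index v w).+1 w) | v <- iota 1 (size w)].

(* t_k^{-1}: the permutation w of [k] with t_k(w) = c (t_k is a bijection
   onto [1] x ... x [k]); default iota 1 k if none exists. *)
Definition tkinv (k : nat) (c : seq nat) : seq nat :=
  head (iota 1 k) [seq w <- permutations (iota 1 k) | tk w == c].

Section Maps.
Variable n : nat.
Implicit Types (a : {ffun 'I_n -> 'I_n}).

Definition Phi a : {ffun 'I_n -> 'I_n} :=
  let X := Zc a in
  if X == set0 then a else
  let k := #|X| in
  (* b = b_1 ... b_k = t_k^{-1}(a_{i_1} ... a_{i_k}); enum X is increasing *)
  let b := tkinv k [seq v1 a i | i <- enum X] in
  let sigma (m : nat) :=
    if m == 1 then k.+1 else if m <= k.+1 then nth 0 b (m - 2) else m in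
  [ffun j => insubd j
     (if j \in X then nth 0 b (rank X j).-1 else sigma (v1 a j)).-1].

Definition Psi a : {ffun 'I_n -> 'I_n} :=
  let X := Run a in
  if X == set0 then a else
  let k := #|X| in
  let w := [seq v1 a i | i <- enum X] in
  let c := tk w in
  let tau (m : nat) :=
    if m <= k then (index m w).+2 else if m == k.+1 then 1 else m in
  [ffun j => insubd j
     (if j \in X then nth 0 c (rank X j).-1 else tau (v1 a j)).-1].

End Maps.

(* Main.v *)
Require Import Defs.
From mathcomp Require Import all_boot all_order zify.
Set Implicit Arguments. Unset Strict Implicit. Unset Printing Implicit Defensive.

Definition g (w : seq nat) v := count (fun x => x <= v) (take (index v w).+1 w).

Lemma tkE w : tk w = [seq g w v | v <- iota 1 (size w)].
Proof. by []. Qed.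

Lemma g_ins L R m v : v \in L ++ R -> v < m -> g (L ++ m :: R) v = g (L ++ R) v.
Proof.
move=> vin vm; rewrite /g !index_cat.
case: ifP => vL.
  have hi : (index v L) < size L by rewrite index_mem.
  rewrite !take_cat; case: ifP => // _.
  have -> : (index v L).+1 - size L = 0 by lia.
  by rewrite !take0.
have vR : v \in R by move: vin; rewrite mem_cat vL.
have mv : (m == v) = false by apply/negbTE; lia.
rewrite /= mv !take_cat.
have -> : (size L + (index v R).+1).+1 < size L = false by lia.
have -> : (size L + index v R).+1 < size L = false by lia.
have -> : (size L + (index v R).+1).+1 - size L = (index v R).+2 by lia.
have -> : (size L + index v R).+1 - size L = (index v R).+1 by lia.
by rewrite /= !count_cat /= leqNgt vm.
Qed.

Lemma g_new L R m : m \notin L -> all (fun x => x <= m) L -> g (L ++ m :: R) m = (size L).+1.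
Proof.
move=> mL allL; rewrite /g index_cat (negbTE mL) /= eqxx addn0 take_cat.
have -> : ((size L).+1 < size L) = false by lia.
rewrite subSnn /= count_cat /= leqnn take0 /=.
move: allL; rewrite all_count => /eqP ->; lia.
Qed.

Lemma tk_surj c : (forall p, p < size c -> 0 < nth 0 c p <= p.+1) ->
  exists2 w, perm_eq w (iota 1 (size c)) & tk w = c.
Proof.
elim/last_ind: c => [|c x IH] H; first by exists [::].
have H' : forall p, p < size c -> 0 < nth 0 c p <= p.+1.
  move=> p hp; have := H p; rewrite size_rcons nth_rcons hp; apply; lia.
have Hx : 0 < x <= (size c).+1.
  by have := H (size c); rewrite size_rcons nth_rcons ltnn eqxx; apply.
have [w' pw' tkw'] := IH H'.
have sw' : size w' = size c by rewrite (perm_size pw') size_iota.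
set L := take x.-1 w'; set R := drop x.-1 w'.
have LR : L ++ R = w' by rewrite cat_take_drop.
have sL : size L = x.-1 by rewrite size_takel // sw'; lia.
have memw' : forall v, v \in w' -> 0 < v <= size c.
  by move=> v; rewrite (perm_mem pw') mem_iota; lia.
have iota1 : iota 1 (size c).+1 = rcons (iota 1 (size c)) (size c).+1.
  by rewrite -cats1 (_ : [:: (size c).+1] = iota (1 + size c) 1) // -iotaD addn1.
exists (L ++ (size c).+1 :: R).
  rewrite size_rcons iota1.
  have -> : L ++ (size c).+1 :: R = L ++ [:: (size c).+1] ++ R by [].
  by rewrite perm_catCA /= LR perm_sym perm_rcons perm_cons perm_sym.
rewrite tkE.
have -> : size (L ++ (size c).+1 :: R) = (size c).+1 by rewrite -sw' -LR !size_cat /=; lia.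
rewrite iota1 map_rcons; congr rcons.
  rewrite -[in RHS]tkw' tkE sw'; apply/eq_in_map => v; rewrite mem_iota => hv.
  rewrite -LR; apply: g_ins; last lia.
  by rewrite LR (perm_mem pw') mem_iota.
rewrite g_new.
- by rewrite sL; lia.
- apply/negP => /(mem_take) /memw'; lia.
- apply/allP => v /mem_take /memw'; lia.
Qed.

Lemma tkinvP c : (forall p, p < size c -> 0 < nth 0 c p <= p.+1) ->
  perm_eq (tkinv (size c) c) (iota 1 (size c)) /\ tk (tkinv (size c) c) = c.
Proof.
move=> /tk_surj [w pw tkw]; rewrite /tkinv.
set F := [seq _ <- _ | _].
have wF : w \in F by rewrite mem_filter tkw eqxx mem_permutations.
have : head (iota 1 (size c)) F \in F by case: F wF => //= u F _; rewrite mem_head.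
by rewrite mem_filter mem_permutations => /andP [/eqP -> pu].
Qed.

Section Rank.
Variable n : nat.
Implicit Types (X Y : {set 'I_n}) (a : {ffun 'I_n -> 'I_n}).

Lemma count_le_index (s : seq 'I_n) x : sorted ltn (map val s) -> x \in s ->
  count (fun y : 'I_n => y <= x) s = (index x s).+1.
Proof.
elim: s => // y s IH /= Hs.
have Hs' : sorted ltn (map val s) := path_sorted Hs.
have Hall : all (fun z => y < z) (map val s) := order_path_min ltn_trans Hs.
rewrite in_cons; case: eqP => [-> _ | nxy /= xs].
  rewrite leqnn add1n eqxx; congr _.+1; apply/eqP; rewrite -leqn0 leqNgt -has_count.
  apply/hasP => -[z zs]; move/allP: Hall => /(_ (val z)); rewrite map_f // => /(_ isT).
  rewrite ltnNge => /negP; exact.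
have yx : y < x by move/allP: Hall => /(_ (val x)); rewrite map_f //; apply.
rewrite (ltnW yx) IH //; case: eqP => // h; by rewrite h in nxy.
Qed.

Lemma sorted_enum_set X : sorted ltn (map val (enum X)).
Proof.
rewrite -[enum _](eq_filter (mem_enum _)).
rewrite -(eq_filter (mem_map val_inj _)) -filter_map.
by rewrite (sorted_filter ltn_trans) // unlock val_ord_enum iota_ltn_sorted.
Qed.

Lemma rank_count X x : rank X x = count (fun y : 'I_n => y <= x) (enum X).
Proof.
rewrite /rank (_ : [set y in X | y <= x] = X :&: [set y : 'I_n | y <= x]); last first.
  by apply/setP => y; rewrite !inE.
rewrite cardE (perm_size (enum_setI _ _)) size_filter; apply: eq_count => y.
by rewrite inE.
Qed.

Lemma rankE X x : x \in X -> rank X x = (index x (enum X)).+1.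
Proof.
by move=> xX; rewrite rank_count count_le_index ?sorted_enum_set ?mem_enum.
Qed.

Lemma rank_nth X p x0 : p < #|X| -> rank X (nth x0 (enum X) p) = p.+1.
Proof.
move=> hp; rewrite rankE ?index_uniq ?enum_uniq // -?cardE //.
by rewrite -mem_enum mem_nth // -cardE.
Qed.

Lemma rank_mono X (x y : 'I_n) : x <= y -> rank X x <= rank X y.
Proof.
move=> xy; apply: subset_leq_card; apply/subsetP => z; rewrite !inE.
by case/andP => -> /= zx; apply: leq_trans zx xy.
Qed.

Lemma rank_sub X Y x : X \subset Y -> rank X x <= rank Y x.
Proof.
move=> /subsetP XY; apply: subset_leq_card; apply/subsetP => z; rewrite !inE.
by case/andP => /XY -> ->.
Qed.

Lemma rank_le_card X x : rank X x <= #|X|.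
Proof. by apply: subset_leq_card; apply/subsetP => z; rewrite !inE => /andP []. Qed.

Lemma rank_pos X x : x \in X -> 0 < rank X x.
Proof. by move=> xX; apply/card_gt0P; exists x; rewrite !inE xX leqnn. Qed.

Lemma rank_add X j : j \notin X -> rank (j |: X) j = (rank X j).+1.
Proof.
move=> jX; rewrite /rank (_ : [set y in j |: X | y <= j] = j |: [set y in X | y <= j]).
  by rewrite cardsU1 !inE (negbTE jX).
by apply/setP => y; rewrite !inE; case: eqP => // ->; rewrite leqnn.
Qed.

Lemma rank_lt X (x y : 'I_n) : x < y -> y \in X -> rank X x < rank X y.
Proof.
move=> xy yX; apply: proper_card; apply/properP; split.
  by apply/subsetP => z; rewrite !inE => /andP [-> /= zx]; apply: leq_trans zx (ltnW xy).
by exists y; rewrite !inE yX /= ?leqnn // -ltnNge.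
Qed.

Lemma Zc_ok a : center_ok a (Zc a).
Proof.
apply/forallP => x; apply/implyP => /bigcupP [Y okY xY].
move: (okY) => /forallP /(_ x); rewrite xY /= => h; apply: leq_trans h _.
by apply: rank_sub; apply: (bigcup_sup Y).
Qed.

Lemma Zc_max a j : j \notin Zc a -> (rank (Zc a) j).+1 < v1 a j.
Proof.
move=> jZ; rewrite ltnNge; apply/negP => h; move/negP: (jZ); apply.
have ok : center_ok a (j |: Zc a).
  apply/forallP => x; apply/implyP; rewrite in_setU1; case: eqP => [-> _ | _ /= xZ].
    by rewrite rank_add.
  have := Zc_ok a; move/forallP => /(_ x); rewrite xZ /= => h2.
  by apply: leq_trans h2 _; apply: rank_sub; apply: subsetUr.
by apply/bigcupP; exists (j |: Zc a) => //; rewrite setU11.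
Qed.

Lemma mem_vals a m : (m \in vals a) = [exists j, v1 a j == m].
Proof.
apply/mapP/existsP => [[j _ ->]|[j /eqP <-]]; first by exists j.
by exists j; rewrite ?mem_enum.
Qed.

Lemma runE a k : k <= n -> (forall m, 0 < m <= k -> m \in vals a) ->
  (k < n -> k.+1 \notin vals a) -> run a = k.
Proof.
move=> kn hin hout; apply/eqP; rewrite eqn_leq; apply/andP; split.
  apply/bigmax_leqP => i /allP hi; rewrite leqNgt; apply/negP => ki.
  have : k.+1 \in vals a by apply: hi; rewrite mem_iota; lia.
  by apply/negP; apply: hout; have := ltn_ord i; lia.
have kn1 : k < n.+1 by [].
apply: (@leq_trans (Ordinal kn1)) => //.
apply: leq_bigmax_cond; apply/allP => m; rewrite mem_iota => hm; apply: hin; simpl in *; lia.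
Qed.

End Rank.

Lemma insub_v1 n (j : 'I_n) v : 0 < v <= n -> (val (insubd j v.-1)).+1 = v.
Proof. by move=> hv; rewrite val_insubd ifT; lia. Qed.

Lemma map_index (T : eqType) (U : Type) (s : seq T) (F : nat -> U) (x0 : T) : uniq s ->
  [seq F (index i s) | i <- s] = [seq F p | p <- iota 0 (size s)].
Proof.
move=> us; transitivity [seq F (index i s) | i <- mkseq (nth x0 s) (size s)].
  by rewrite mkseq_nth.
rewrite /mkseq -map_comp; apply/eq_in_map => p.
by rewrite mem_iota => hp /=; rewrite index_uniq.
Qed.

Definition sig k (b : seq nat) (m : nat) :=
  if m == 1 then k.+1 else if m <= k.+1 then nth 0 b (m - 2) else m.

Section Main.
Variable n : nat.
Variable a : {ffun 'I_n -> 'I_n}.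
Hypothesis XN : Zc a != set0.

Local Notation X := (Zc a).
Local Notation k := #|Zc a|.
Local Notation s := (enum (Zc a)).
Local Notation w0 := [seq v1 a i | i <- enum (Zc a)].
Local Notation b := (tkinv #|Zc a| [seq v1 a i | i <- enum (Zc a)]).

Lemma x0_ex : exists x0 : 'I_n, x0 \in X.
Proof. by move/set0Pn: XN. Qed.

Lemma kn : k <= n.
Proof. by have := max_card X; rewrite card_ord. Qed.

Lemma kn' j : j \notin X -> k < n.
Proof.
move=> jX; have := cardsC X; rewrite card_ord => h.
have : 0 < #|~: X| by apply/card_gt0P; exists j; rewrite inE.
lia.
Qed.

Lemma sw0 : size w0 = k.
Proof. by rewrite size_map -cardE. Qed.

Lemma w0_valid p : p < size w0 -> 0 < nth 0 w0 p <= p.+1.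
Proof.
have [x0 _] := x0_ex.
rewrite sw0 => hp; rewrite (nth_map x0) -?cardE // /v1 /= -(rank_nth x0 hp).
have := Zc_ok a; move/forallP => /(_ (nth x0 s p)); rewrite -mem_enum mem_nth -?cardE //.
Qed.

Lemma bP : perm_eq b (iota 1 k) /\ tk b = w0.
Proof. by have := tkinvP w0_valid; rewrite sw0. Qed.

Lemma b_mem v : (v \in b) = (0 < v <= k).
Proof. by case: bP => pb _; rewrite (perm_mem pb) mem_iota; lia. Qed.

Lemma b_size : size b = k.
Proof. by case: bP => pb _; rewrite (perm_size pb) size_iota. Qed.

Lemma b_uniq : uniq b.
Proof. by case: bP => pb _; rewrite (perm_uniq pb) iota_uniq. Qed.

Lemma b_nth p : p < k -> 0 < nth 0 b p <= k.
Proof. by move=> hp; rewrite -b_mem mem_nth // b_size. Qed.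

Lemma b_inj p q : p < k -> q < k -> nth 0 b p = nth 0 b q -> p = q.
Proof. by move=> hp hq /eqP; rewrite nth_uniq ?b_size ?b_uniq // => /eqP. Qed.

Lemma sig_cases m : 0 < m ->
  [\/ m = 1 /\ sig k b m = k.+1,
      1 < m <= k.+1 /\ sig k b m = nth 0 b (m - 2) | k.+1 < m /\ sig k b m = m].
Proof.
move=> m0; rewrite /sig; case: eqP => [->|m1]; first by constructor 1.
by case: ifP => h; [constructor 2 | constructor 3]; split => //; lia.
Qed.

Lemma phiE j : v1 (Phi a) j =
  if j \in X then nth 0 b (rank X j).-1 else sig k b (v1 a j).
Proof.
rewrite /Phi; cbv zeta; rewrite (negbTE XN) [in LHS]/v1 ffunE insub_v1 -/(sig _ _ _) //.
case: ifP => jX.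
  have := rank_pos jX; have := rank_le_card X j; have := kn => h1 h2 h3.
  have hb : (rank X j).-1 < k by lia.
  have := b_nth hb; rewrite /v1; lia.
have := kn' (negbT jX); have : v1 a j <= n by rewrite /v1 ltn_ord.
have : 0 < v1 a j by [].
move=> h0 hn hk; case: (sig_cases h0) => [[_ ->]|[hm ->]|[_ ->]]; try lia.
have hb : v1 a j - 2 < k by lia.
have := b_nth hb; rewrite /v1 in hm *; lia.
Qed.

Lemma hit m : 0 < m <= k -> exists2 x, x \in X & v1 (Phi a) x = m.
Proof.
move=> hm; have [x0 _] := x0_ex.
have mb : m \in b by rewrite b_mem.
set p := index m b.
have hp : p < k by rewrite -b_size index_mem.
exists (nth x0 s p); first by rewrite -mem_enum mem_nth // -cardE.
by rewrite phiE -mem_enum mem_nth -?cardE // rank_nth //= nth_index.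
Qed.

Lemma run_Phi : run (Phi a) = k.
Proof.
apply: runE; first exact: kn.
  by move=> m /hit [x _ hx]; rewrite mem_vals; apply/existsP; exists x; rewrite hx.
move=> hk; rewrite mem_vals; apply/negP => /existsP [j /eqP].
rewrite phiE; case: ifP => jX.
  have := rank_pos jX; have := rank_le_card X j => h1 h2.
  have hb : (rank X j).-1 < k by lia.
  have := b_nth hb; lia.
have h0 : 0 < v1 a j by [].
have := Zc_max (negbT jX).
case: (sig_cases h0) => [[-> ->]|[hm ->]|[hm ->]]; try lia.
have hb : v1 a j - 2 < k by lia.
have := b_nth hb; lia.
Qed.

Lemma Run_Phi : Run (Phi a) = X.
Proof.
have [x0 _] := x0_ex.
apply/setP => j; rewrite inE run_Phi.
case: (boolP (j \in X)) => jX.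
  have := rank_pos jX; have := rank_le_card X j => h1 h2.
  have hb : (rank X j).-1 < k by lia.
  have := b_nth hb => hbn.
  rewrite phiE ifT //; apply/andP; split; first by case/andP: hbn.
  apply/forallP => j'; apply/implyP; rewrite phiE => /eqP.
  case: ifP => j'X.
    have := rank_pos j'X; have := rank_le_card X j' => h3 h4.
    move=> e; have hx : (rank X j').-1 < k by lia.
    have := b_inj hx hb e => h.
    rewrite leqNgt; apply/negP => jj'; have := rank_lt jj' j'X; lia.
  have h0 : 0 < v1 a j' by [].
  have := Zc_max (negbT j'X).
  case: (sig_cases h0) => [[-> ->]|[hm ->]|[hm ->]]; try lia.
  move=> hz e; have hx : v1 a j' - 2 < k by lia.
  have := b_inj hx hb e => h.
  rewrite leqNgt; apply/negP => jj'; have := rank_mono X (ltnW jj'); lia.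
apply/negP => /andP [hv /forallP hall].
move: hv; rewrite phiE (negbTE jX).
have h0 : 0 < v1 a j by [].
have := Zc_max jX.
case: (sig_cases h0) => [[-> ->]|[hm hs]|[hm ->]]; try lia.
rewrite hs; set p := v1 a j - 2.
have hp : p < k by rewrite /p; lia.
set x := nth x0 s p.
have xX : x \in X by rewrite -mem_enum mem_nth -?cardE.
have rx : rank X x = p.+1 by rewrite rank_nth.
have := hall x; rewrite phiE ifT // rx /= [v1 (Phi a) j]phiE (negbTE jX) hs eqxx /= => xj.
have xj' : x < j by rewrite ltn_neqAle xj andbT; apply/eqP => /val_inj e; move: jX; rewrite -e xX.
have := rank_mono X (ltnW xj'); rewrite rx /p; lia.
Qed.

Lemma w_Phi : [seq v1 (Phi a) i | i <- s] = b.
Proof.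
have [x0 _] := x0_ex.
transitivity [seq nth 0 b (index i s) | i <- s].
  apply/eq_in_map => i; rewrite mem_enum => iX; by rewrite phiE iX rankE.
rewrite (map_index _ x0) ?enum_uniq // (_ : size s = size b); first exact: mkseq_nth.
by rewrite b_size cardE.
Qed.

Lemma tau_sig m : 0 < m -> m <= n -> (m = 1 -> k < n) ->
  (if sig k b m <= k then (index (sig k b m) b).+2
   else if sig k b m == k.+1 then 1 else sig k b m) = m.
Proof.
move=> h0 hn hk.
case: (sig_cases h0) => [[-> ->]|[hm ->]|[hm ->]].
- by rewrite ltnn eqxx.
- have hb : m - 2 < k by lia.
  have := b_nth hb => hbn; rewrite ifT; last by case/andP: hbn.
  rewrite index_uniq ?b_uniq ?b_size //; lia.
- rewrite ifF; last lia. rewrite ifF //; apply/negbTE; lia.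
Qed.

Lemma Psi_Phi : Psi (Phi a) = a.
Proof.
have [x0 _] := x0_ex.
apply/ffunP => j; apply/val_inj/succn_inj.
have h0 : 0 < v1 a j by [].
have hn : v1 a j <= n by rewrite /v1 ltn_ord.
rewrite /Psi; cbv zeta; rewrite Run_Phi (negbTE XN) w_Phi ffunE.
case: ifP => jX.
  case: bP => _ ->; rewrite rankE //= (nth_map x0) ?nth_index ?mem_enum ?insub_v1 //.
  by rewrite index_mem mem_enum.
rewrite phiE jX tau_sig ?insub_v1 //.
by move=> _; apply: kn' (negbT jX).
Qed.

Lemma PF_Phi : is_PF a -> is_PF (Phi a).
Proof.
move=> /forallP hPF; apply/forallP => i.
case: (leqP i.+1 k) => hi.
  have tn : i.+1 <= n by have := ltn_ord i.
  pose S := [set j | v1 (Phi a) j <= i.+1].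
  have : #|[set widen_ord tn y | y in [set: 'I_i.+1]]| <= #|Phi a @: S|.
    apply: subset_leq_card; apply/subsetP => _ /imsetP [y _ ->].
    have hy : 0 < y.+1 <= k by have := ltn_ord y; lia.
    have [x xX hx] := hit hy.
    apply/imsetP; exists x; first by rewrite inE hx ltn_ord.
    by apply/val_inj => /=; apply: succn_inj; rewrite -hx.
  have cw : #|widen_ord tn @: [set: 'I_i.+1]| = i.+1.
    rewrite card_imset ?cardsT ?card_ord // => u v e; apply/val_inj.
    by have := congr1 val e.
  rewrite cw => h; apply: leq_trans h _; exact: leq_imset_card.
have {}hi : k < i.+1 := hi.
have -> : [set j | v1 (Phi a) j <= i.+1] = [set j | v1 a j <= i.+1]; last exact: hPF.
apply/setP => j; rewrite !inE phiE; case: ifP => jX.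
  have := rank_pos jX; have := rank_le_card X j => h1 h2.
  have hb : (rank X j).-1 < k by lia.
  have := b_nth hb => hbn.
  have := Zc_ok a; move/forallP => /(_ j); rewrite jX /= => hv.
  apply/idP/idP => _.
    by apply: leq_trans hv _; apply: leq_trans h1 _; exact: ltnW hi.
  by case/andP: hbn => _ h; apply: leq_trans h (ltnW hi).
have h0 : 0 < v1 a j by [].
case: (sig_cases h0) => [[-> ->]|[hm ->]|[hm ->]]; try lia; try (apply/idP/idP => _; lia).
have hb : v1 a j - 2 < k by lia.
have := b_nth hb => hbn.
apply/idP/idP => _; lia.
Qed.

End Main.

Lemma Zc0 n (a : {ffun 'I_n -> 'I_n}) : Zc a = set0 ->
  [/\ Phi a = a, run a = 0, Run a = set0 & Psi a = a].
Proof.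
move=> Z0.
have r0 : run a = 0.
  apply: runE => // [m|_]; first lia.
  rewrite mem_vals; apply/negP => /existsP [j /eqP hj].
  have := @Zc_max n a j; rewrite Z0 inE hj /=; lia.
have R0 : Run a = set0 by apply/setP => j; rewrite !inE r0 /v1 ltn0.
split => //; first by rewrite /Phi Z0 eqxx.
by rewrite /Psi R0 eqxx.
Qed.

Lemma key n (a : {ffun 'I_n -> 'I_n}) :
  [/\ Run (Phi a) = Zc a, run (Phi a) = zc a & Psi (Phi a) = a].
Proof.
case: (eqVneq (Zc a) set0) => [Z0|XN].
  by have [-> r0 R0 ->] := Zc0 Z0; rewrite /zc Z0 cards0.
by split; [exact: Run_Phi | exact: run_Phi | exact: Psi_Phi].
Qed.

Lemma PF_Phi' n (a : {ffun 'I_n -> 'I_n}) : is_PF a -> is_PF (Phi a).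
Proof.
case: (eqVneq (Zc a) set0) => [Z0|XN]; last exact: PF_Phi.
by have [-> _ _ _] := Zc0 Z0.
Qed.

Theorem theorem3p4 (n : nat) (hn : 0 < n) :
  (forall a : {ffun 'I_n -> 'I_n},
      [/\ zc a = run (Phi a), Zc a = Run (Phi a),
          run a = zc (Psi a) & Run a = Zc (Psi a)]) /\
  [/\ bijective (@Phi n), bijective (@Psi n),
      cancel (@Phi n) (@Psi n) & cancel (@Psi n) (@Phi n)] /\
  (@Phi n) @: [set a | is_PF a] = [set a | is_PF a].
Proof.
have c1 : cancel (@Phi n) (@Psi n) by move=> a; case: (key a).
have iP : injective (@Phi n) := can_inj c1.
have bP : bijective (@Phi n) := injF_bij iP.
have c2 : cancel (@Psi n) (@Phi n).
  move=> a; case: bP => g h1 h2; rewrite -{1}(h2 a) c1 h2 //.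
have bQ : bijective (@Psi n) by exists (@Phi n).
split; last split => //.
  move=> a; case: (key a) => R r _; case: (key (Psi a)) => R' r' _.
  by rewrite c2 in R' r'; split.
apply/eqP; rewrite eqEcard card_imset // leqnn andbT.
by apply/subsetP => _ /imsetP [a ha ->]; rewrite inE PF_Phi' //; rewrite inE in ha.
Qed.
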